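(* Let $t\geq 2$ be an integer, $m=4t+2$, $n=2^m+1$ and $\delta_2=2^{4t-1}+\frac{2^{4t}-1}{5}$. If $x$ is an odd integer with $\delta_2+2\leq x\leq\delta_2+3\cdot 2^{4t-5}$, then $x$ is not a coset leader modulo $n$.
   Context: For $n=2^m+1$ and an integer $x$, the 2-cyclotomic coset of $x$ modulo $n$ is $C_x=\{x\cdot 2^{j} \bmod n : j\geq 0\}\subseteq\{0,1,\dots,n-1\}$. For $0\leq x\leq n-1$, ''$x$ is a coset leader'' means that $x$ is the smallest element of $C_x$. *)

(* Defs.v *)
From mathcomp Require Import all_boot.

Definition cyc_coset (n x : nat) : nat -> Prop :=
  fun y => exists j : nat, y = (x * 2 ^ j) %% n.

Definition coset_leader (n x : nat) : Prop :=
  x < n /\ forall y, cyc_coset n x y -> x <= y.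

Definition delta2 (t : nat) : nat := 2 ^ (4 * t - 1) + (2 ^ (4 * t) - 1) %/ 5.

(* Main.v *)
Require Import Defs.
From mathcomp Require Import all_boot.
From mathcomp Require Import zify.

Theorem lemma4p3 (t x : nat) :
  2 <= t ->
  odd x ->
  delta2 t + 2 <= x <= delta2 t + 3 * 2 ^ (4 * t - 5) ->
  ~ coset_leader (2 ^ (4 * t + 2) + 1) x.
Proof.
move=> Ht _ /andP[Hlo Hhi] [Hxn Hmin].
have [H7 H5] : 7 * (2 ^ (4 * t + 2) + 1) <= 40 * x /\ 5 * x < 2 ^ (4 * t + 2) + 1.
  move: Hlo Hhi; rewrite /delta2.
  set a := 4 * t - 5.
  have E1 : 4 * t - 1 = a + 4 by rewrite /a; lia.
  have E2 : 4 * t = a + 5 by rewrite /a; lia.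
  have E3 : 4 * t + 2 = a + 7 by rewrite /a; lia.
  rewrite E1 E3 E2 !expnD.
  set P := 2 ^ a.
  have HP : 0 < P by rewrite expn_gt0.
  set u := P * 2 ^ 5 - 1.
  have Hd := divn_eq u 5.
  have Hm : u %% 5 < 5 by rewrite ltn_pmod.
  rewrite /u in Hd Hm *.
  move=> H1 H2; split; lia.
set m := 4 * t + 2 in Hxn Hmin H7 H5 *.
set n := 2 ^ m + 1 in Hxn Hmin H7 H5 *.
have key : forall j, x <= x * 2 ^ j %% n.
  by move=> j; apply: Hmin; exists j.
have Hx0 : 0 < x by lia.
have Hn1 : 1 < n by lia.
have Lgen : forall y k d, y * 2 ^ (k + d) %% n = ((y * 2 ^ k %% n) * 2 ^ d) %% n.
  by move=> y k d; rewrite expnD mulnA modnMml.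
have Em : 2 ^ m = n - 1 by rewrite /n addnK.
have Lneg : forall r, 0 < r < n -> (r * (n - 1)) %% n = n - r.
  move=> r /andP[Hr1 Hr2].
  have -> : r * (n - 1) = (r - 1) * n + (n - r) by nia.
  by rewrite modnMDl modn_small //; lia.
have Lm : forall y, (y * 2 ^ m) %% n = ((y %% n) * (n - 1)) %% n.
  by move=> y; rewrite -modnMml Em.
have L2m : forall y, (y * 2 ^ (m + m)) %% n = y %% n.
  move=> y; rewrite expnD mulnA -modnMml Lm modn_mod Lm.
  have Hr : y %% n < n by rewrite ltn_pmod //; lia.
  case: (posnP (y %% n)) => Hy.
    by rewrite Hy mul0n mod0n mul0n mod0n.
  rewrite (Lneg (y %% n)); last by apply/andP; split.
  by rewrite Lneg; [lia | apply/andP; split; lia].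
have Inv : forall i, exists b : bool, 5 * (x * 2 ^ (4 * i + b * m) %% n) <= n.
  elim=> [|i [b Hb]].
    by exists false; rewrite mul0n addn0 expn0 muln1 modn_small //; lia.
  set j := 4 * i + b * m in Hb.
  set c := x * 2 ^ j %% n in Hb.
  have Hc1 : x <= c by apply: key.
  have H40 : 7 * n <= 40 * c by lia.
  case: (leqP (3 * n) (16 * c)) => H16.
    exists b.
    have -> : 4 * i.+1 + b * m = j + 4 by rewrite /j; lia.
    rewrite Lgen -/c.
    have -> : c * 2 ^ 4 = 3 * n + (16 * c - 3 * n) by rewrite (_ : 2 ^ 4 = 16) //; lia.
    rewrite modnMDl modn_small; lia.
  have Hr : (x * 2 ^ (j + 4)) %% n = 16 * c - 2 * n.
    rewrite Lgen -/c.
    have -> : c * 2 ^ 4 = 2 * n + (16 * c - 2 * n) by rewrite (_ : 2 ^ 4 = 16) //; lia.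
    rewrite modnMDl modn_small; lia.
  have Hneg : (x * 2 ^ (j + 4 + m)) %% n = 3 * n - 16 * c.
    rewrite Lgen Hr Em Lneg; [lia | apply/andP; split; lia].
  case Eb: b.
    exists false.
    rewrite mul0n addn0.
    rewrite -(L2m (x * 2 ^ (4 * i.+1))) -mulnA -expnD.
    have -> : 4 * i.+1 + (m + m) = j + 4 + m by rewrite /j Eb; lia.
    rewrite Hneg; lia.
  exists true.
  have -> : 4 * i.+1 + true * m = j + 4 + m by rewrite /j Eb; lia.
  rewrite Hneg; lia.
have [b Hb] := Inv t.
set c := x * 2 ^ (4 * t + b * m) %% n in Hb.
have Hc1 : x <= c by apply: key.
have H4 : x * 2 ^ (4 * t + b * m + 2) %% n = 4 * c.
  by rewrite Lgen -/c (_ : 2 ^ 2 = 4) // modn_small; lia.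
case Eb: b H4 => H4.
  have E : 4 * t + true * m + 2 = m + m by rewrite /m; lia.
  by move: H4; rewrite E L2m modn_small //; lia.
have E : 4 * t + false * m + 2 = m by rewrite /m; lia.
move: H4; rewrite E Lm (modn_small Hxn) Lneg; [lia | apply/andP; split; lia].
Qed.
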